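(* Let $G$ be a countably infinite graph for which there exists a finite set $S\subseteq V(G)$ such that $G-S$ has no finite dominating set. Then for every $r\in\mathbb{N}$ and every $r$-coloring of the edges of $K_\mathbb{N}$, there is a monochromatic copy of $G$ whose vertex set has positive upper density (i.e. $G$ is $r$-Ramsey-dense).
   Context: $K_{\mathbb{N}}$ is the complete graph on $\mathbb{N}=\{1,2,\dots\}$. A copy of $G$ is a subgraph of $K_\mathbb{N}$ isomorphic to $G$; monochromatic means all its edges have the same color. Upper density of $V\subseteq\mathbb{N}$: $\overline{d}(V)=\limsup_{t\to\infty}|V\cap\{1,\dots,t\}|/t$. A set $X\subseteq V(G)$ is dominating if every vertex of $V(G)\setminus X$ has a neighbor in $X$. *)

(* Defs.v *)
From HB Require Import structures.
From mathcomp Require Import all_boot all_order all_algebra.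
From mathcomp Require Import all_classical all_reals all_analysis.
From mathcomp Require Import Rstruct.
Set Implicit Arguments. Unset Strict Implicit. Unset Printing Implicit Defensive.
Import Order.TTheory GRing.Theory Num.Theory.

Local Open Scope classical_set_scope.
Local Open Scope ring_scope.

Record graph := Graph {
  adj : nat -> nat -> Prop;
  adj_sym : forall u v, adj u v -> adj v u;
  adj_irrefl : forall v, ~ adj v v }.

Definition dominating_minus (G : graph) (S X : seq nat) : Prop :=
  (forall x, x \in X -> x \notin S) /\
  (forall v, v \notin S -> v \notin X -> exists2 x, x \in X & adj G v x).

Definition no_finite_dominating_minus (G : graph) (S : seq nat) : Prop :=
  forall X : seq nat, ~ dominating_minus G S X.

(* Upper density of V subset of N = {1,2,...}:
   limsup_{t -> oo} |V ∩ {1,...,t}| / t  (sequence indexed from t = 1). *)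
Definition upper_density (V : set nat) : \bar Rdefinitions.R :=
  limn_esup (fun n : nat =>
    ((\sum_(1 <= k < n.+2) (`[< V k >] : bool)%:R) / (n.+1)%:R)%:E).

(* An r-colouring of the edges of K_N (vertices 1,2,...): a colour for every
   pair {x, y} with x <> y, independent of the order of x, y. *)
Definition edge_coloring (r : nat) (c : nat -> nat -> 'I_r) : Prop :=
  forall x y, c x y = c y x.

(* f is an embedding of G into K_N (an isomorphism of G onto the subgraph of
   K_N with edge set {f u f v : uv in E(G)}), and that copy is monochromatic
   under c. *)
Definition mono_copy (G : graph) (r : nat) (c : nat -> nat -> 'I_r)
    (f : nat -> nat) : Prop :=
  injective f /\ (forall v, (0 < f v)%N) /\
  exists col : 'I_r, forall u v, adj G u v -> c (f u) (f v) = col.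

(* Main.v *)
Require Import Defs.
From HB Require Import structures.
From mathcomp Require Import all_boot all_order all_algebra.
From mathcomp Require Import all_classical all_reals all_analysis.
From mathcomp Require Import Rstruct lra.
Set Implicit Arguments. Unset Strict Implicit. Unset Printing Implicit Defensive.
Import Order.TTheory GRing.Theory Num.Theory.
Local Open Scope classical_set_scope.
Local Open Scope ring_scope.

Notation RR := Rdefinitions.R.

Definition cnt (V : set nat) (n : nat) : nat :=
  count (fun k => `[< V k >]) (iota 1 n.+1).

Definition thin (V : set nat) : Prop :=
  forall e : RR, 0 < e -> exists N, forall n, (N <= n)%N ->
    (cnt V n)%:R / (n.+1)%:R <= e.

Lemma sum_cnt (V : set nat) n :
  (\sum_(1 <= k < n.+2) (`[< V k >] : bool)%:R : RR) = (cnt V n)%:R.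
Proof.
rewrite /cnt /index_iota subn1 -[iota 1 n.+1]/(iota 1 n.+1) -[count _ _]/(count (fun k => `[< V k >]) (iota 1 n.+1)).
elim: (iota _ _) => [|a s IH]; first by rewrite big_nil.
by rewrite big_cons /= IH natrD.
Qed.

Lemma thin_sub (A B : set nat) : A `<=` B -> thin B -> thin A.
Proof.
move=> AB tB e e0; have [N HN] := tB e e0; exists N => n Nn.
apply: le_trans (HN n Nn); rewrite ler_pM2r ?invr_gt0 ?ltr0n // ler_nat.
apply: sub_count => k /asboolP Ak; apply/asboolP; exact: AB.
Qed.

Lemma cnt_union (A B : set nat) n : (cnt (A `|` B) n <= cnt A n + cnt B n)%N.
Proof.
rewrite /cnt -count_predUI; apply: leq_trans (leq_addr _ _).
apply: sub_count => k /asboolP [Ak|Bk] /=; apply/orP; [left|right]; exact/asboolP.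
Qed.

Lemma thin_union (A B : set nat) : thin A -> thin B -> thin (A `|` B).
Proof.
move=> tA tB e e0.
have e20 : 0 < e / 2 by rewrite divr_gt0.
have [N1 H1] := tA _ e20; have [N2 H2] := tB _ e20.
exists (maxn N1 N2) => n; rewrite geq_max => /andP[n1 n2].
apply: le_trans (_ : (cnt A n)%:R / (n.+1)%:R + (cnt B n)%:R / (n.+1)%:R <= e).
  by rewrite -mulrDl ler_pM2r ?invr_gt0 ?ltr0n // -natrD ler_nat cnt_union.
by rewrite [e](splitr e) lerD // ?H1 ?H2.
Qed.

Lemma thin_bounded (V : set nat) K : (forall n, (cnt V n <= K)%N) -> thin V.
Proof.
move=> HK e e0; exists (Num.truncn (K%:R / e)) => n Nn.
rewrite ler_pdivrMr ?ltr0n //.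
apply: le_trans (_ : K%:R <= _); first by rewrite ler_nat.
have h := truncnS_gt (K%:R / e).
rewrite -ler_pdivrMl // mulrC; apply/ltW/(lt_le_trans h).
by rewrite ler_nat.
Qed.

Lemma thin_fin (L : seq nat) : thin [set x | x \in L].
Proof.
apply: (@thin_bounded _ (size L)) => n; rewrite /cnt -size_filter.
apply: leq_trans (_ : size (undup L) <= _)%N; last exact: size_undup.
apply: uniq_leq_size; first by rewrite filter_uniq // iota_uniq.
by move=> x; rewrite mem_filter mem_undup => /andP[/asboolP].
Qed.

Lemma thin_zero : thin [set 0%N].
Proof.
apply: (@thin_bounded _ 0) => n; rewrite leqn0 /cnt.
rewrite (@eq_in_count _ _ pred0) ?count_pred0 // => k; rewrite mem_iota => /andP[k1 _].
apply/asboolP => /= k0; by rewrite k0 in k1.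
Qed.

Lemma not_thin_T : ~ thin setT.
Proof.
move=> /(_ (1/2)) [//|N HN]; have := HN N (leqnn N).
rewrite /cnt (eq_count (a2 := predT)); last by move=> k; rewrite asboolT.
rewrite count_predT size_iota divff ?pnatr_eq0 //.
move=> h; lra.
Qed.

Lemma pos_density V : ~ thin V -> (0 < upper_density V)%E.
Proof.
move=> nt; rewrite ltNge; apply/negP => h; apply: nt.
rewrite /upper_density in h.
set u := (X in limn_esup X) in h.
have u0 : forall n, (0 <= u n)%E.
  move=> n; rewrite /u lee_fin sum_cnt divr_ge0 //.
have /fine_cvgP [_ cv] := limn_esup_le_cvg h u0.
move=> e e0; have := (cvgrPdist_le _ _).1 cv e e0.
move=> [N _ HN]; exists N => n /HN /=; rewrite /u /= -sum_cnt.
by rewrite sub0r normrN; apply: le_trans; apply: ler_norm.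
Qed.

Lemma exists_U : exists U : set (set nat), UltraFilter U /\ (forall B, U B -> ~ thin B).
Proof.
pose Fc := [set B : set nat | thin (~` B)].
have PF : ProperFilter Fc.
  split.
    by rewrite /Fc /= setC0; exact: not_thin_T.
  split.
  - by rewrite /Fc /= setCT; apply: thin_sub thin_zero; exact: sub0set.
  - move=> A B; rewrite /Fc /= setCI; exact: thin_union.
  - move=> A B AB; rewrite /Fc /=; apply: thin_sub; exact: subsetC.
have [U [UU FU]] := ultraFilterLemma PF.
exists U; split => // B UB tB.
have UC : U (~` B) by apply: FU; rewrite /Fc /= setCK.
have PU : ProperFilter U := @ultra_proper _ _ UU.
have h : U (B `&` ~` B) := filterI UB UC; rewrite setICr in h; exact: (filter_not_empty U (h (@filter_filter _ _ PU))).
Qed.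

Section UltraProps.
Variable U : set (set nat).
Hypothesis UU : UltraFilter U.
Hypothesis Uthin : forall B, U B -> ~ thin B.
Let PU : ProperFilter U := @ultra_proper _ _ UU.
Let FF : Filter U := @filter_filter _ _ PU.
Lemma UI A B : U A -> U B -> U (A `&` B). Proof. exact: (@filterI _ _ FF). Qed.
Lemma US A B : A `<=` B -> U A -> U B. Proof. exact: (@filterS _ _ FF). Qed.
Lemma UT : U setT. Proof. exact: (@filterT _ _ FF). Qed.
Lemma U0 : ~ U set0. Proof. exact: (@filter_not_empty _ _ PU). Qed.

Lemma U_inter (T : eqType) (s : seq T) (Q : T -> set nat) :
  (forall j, j \in s -> U (Q j)) -> U [set x | forall j, j \in s -> Q j x].
Proof.
elim: s => [|a s IH] H.
  by apply: US UT => x _ j.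
have Us : U [set x | forall j, j \in s -> Q j x].
  by apply: IH => j js; apply: H; rewrite in_cons js orbT.
have UIs : U (Q a `&` [set x | forall j, j \in s -> Q j x]) := UI (H a (mem_head _ _)) Us.
apply: US UIs => x [Qa Qs] j; rewrite in_cons => /orP[/eqP->//|]; exact: Qs.
Qed.

Lemma U_pick (T : finType) (P : T -> set nat) :
  (forall x, exists j, P j x) -> exists j, U (P j).
Proof.
move=> H; apply: contrapT => nH.
have HC : forall j, j \in enum T -> U (~` P j).
  move=> j _; have [UPj|//] := in_ultra_setVsetC (P j) UU.
  by exfalso; apply: nH; exists j.
apply: U0; apply: US (U_inter HC) => x Hx; have [j Pj] := H x; exact: (Hx j (mem_enum _ _) Pj).
Qed.
Lemma U_avoid B (L : seq nat) : U B -> exists x, B x /\ x \notin L /\ (0 < x)%N.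
Proof.
move=> UB; apply: contrapT => nE; apply: (Uthin UB).
apply: thin_sub (thin_union (thin_fin L) thin_zero) => x Bx.
have [xL|xL] := boolP (x \in L); first by left.
right; case: x Bx xL => [//|x] Bx xL; exfalso; apply: nE; by exists x.+1.
Qed.

End UltraProps.

Lemma uniq_map_eq (T T' : eqType) (h : T -> T') (L : seq T) p q :
  uniq (map h L) -> p \in L -> q \in L -> h p = h q -> p = q.
Proof.
elim: L => [//|a L IH] /= /andP[haL uL].
rewrite !in_cons => /orP[/eqP->|pL] /orP[/eqP->|qL] // hpq.
- by exfalso; move: haL; rewrite hpq (map_f h qL).
- by exfalso; move: haL; rewrite -hpq (map_f h pL).
- exact: IH.
Qed.

Definition pre (T : Type) (L M : seq T) := exists K, M = L ++ K.

Lemma pre_refl (T : Type) (L : seq T) : pre L L.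
Proof. by exists [::]; rewrite cats0. Qed.

Lemma pre_trans (T : Type) (L M N : seq T) : pre L M -> pre M N -> pre L N.
Proof. by move=> [K ->] [K' ->]; exists (K ++ K'); rewrite catA. Qed.

Lemma pre_rcons (T : Type) (L : seq T) x : pre L (rcons L x).
Proof. by exists [:: x]; rewrite cats1. Qed.

Lemma pre_mem (T : eqType) (L M : seq T) x : pre L M -> x \in L -> x \in M.
Proof. by move=> [K ->]; rewrite mem_cat => ->. Qed.

Definition lkp (L : seq (nat * nat)) v := (nth (0%N, 0%N) L (index v (map fst L))).2.

Lemma lkp_cat L K v : v \in map fst L -> lkp (L ++ K) v = lkp L v.
Proof.
move=> vL; rewrite /lkp map_cat index_cat vL nth_cat.
by rewrite -(size_map fst) index_mem vL.
Qed.

Lemma lkp_mem L v : v \in map fst L -> (v, lkp L v) \in L.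
Proof.
move=> vL; rewrite /lkp.
have iL : (index v (map fst L) < size L)%N by rewrite -(size_map fst) index_mem.
have e1 : (nth (0%N, 0%N) L (index v (map fst L))).1 = v.
  by rewrite -(nth_map _ 0%N) // nth_index.
by rewrite -{1}e1 -surjective_pairing mem_nth.
Qed.

Lemma lkp_uniq L p : uniq (map fst L) -> p \in L -> lkp L p.1 = p.2.
Proof.
move=> uL pL; have pL1 : p.1 \in map fst L by apply: map_f.
have := lkp_mem pL1 => qL.
by rewrite -(uniq_map_eq uL qL pL).
Qed.

Section Construction.
Variable G : graph.
Variable S : seq nat.
Hypothesis HS : no_finite_dominating_minus G S.
Variable r : nat.
Variable c : nat -> nat -> 'I_r.
Hypothesis csym : edge_coloring c.
Variable U : set (set nat).
Hypothesis UU : UltraFilter U.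
Hypothesis Uthin : forall B, U B -> ~ thin B.
Variable j : 'I_r.
Definition A := [set x | U [set y | c x y = j]].
Hypothesis UA : U A.

Definition Inv (L : seq (nat * nat)) :=
  [/\ uniq (map fst L), uniq (map snd L),
      (forall p, p \in L -> (0 < p.2)%N /\ A p.2) &
      (forall p q, p \in L -> q \in L -> adj G p.1 q.1 -> c p.2 q.2 = j)].

Definition imgP (L : seq (nat * nat)) : set nat :=
  [set z | (0 < z)%N /\ z \notin map snd L /\ A z /\
                    forall y, y \in map snd L -> c y z = j].
Definition fresh_img L : nat := xget 0%N (imgP L).

Lemma fresh_imgP L : Inv L -> imgP L (fresh_img L).
Proof.
move=> [_ _ HA _]; apply: xgetPex.
have UCN : U [set z | forall y, y \in map snd L -> [set z | c y z = j] z].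
  apply: (U_inter UU) => y /mapP [p pL ->]; exact: (HA p pL).2.
have [z [[Az Cz] [zL z0]]] := U_avoid Uthin (map snd L) (UI UU UA UCN).
by exists z.
Qed.

Definition stepA (w : nat) L :=
  if w \in map fst L then L else rcons L (w, fresh_img L).

Lemma stepA_pre w L : pre L (stepA w L).
Proof. rewrite /stepA; case: ifP => _; [exact: pre_refl|exact: pre_rcons]. Qed.

Lemma stepA_mem w L : w \in map fst (stepA w L).
Proof.
rewrite /stepA; case: ifP => // _.
by rewrite map_rcons mem_rcons mem_head.
Qed.

Lemma stepA_new w L p : p \in stepA w L -> p \notin L -> p.1 = w /\ w \notin map fst L.
Proof.
rewrite /stepA; case: ifP => [_ -> //|wL]; rewrite mem_rcons in_cons.
case/orP => [/eqP -> _|->//]; split => //; exact/negbT.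
Qed.

Lemma stepA_inv w L : Inv L -> Inv (stepA w L).
Proof.
move=> IL; rewrite /stepA; case: ifP => // wL.
have [z0 [zL [Az Cz]]] := fresh_imgP IL.
case: IL => u1 u2 HA HC.
split.
- by rewrite map_rcons rcons_uniq wL.
- by rewrite map_rcons rcons_uniq zL.
- by move=> p; rewrite mem_rcons in_cons => /orP[/eqP->//|]; exact: HA.
- move=> p q; rewrite !mem_rcons !in_cons.
  move=> /orP[/eqP->|pL] /orP[/eqP->|qL] /=.
  + by move=> /adj_irrefl.
  + by move=> _; rewrite csym; apply: Cz; apply: map_f.
  + by move=> _; apply: Cz; apply: map_f.
  + exact: HC.
Qed.

Definition st0 := foldl (fun L w => stepA w L) [::] S.

Lemma st0_props : Inv st0 /\ {subset S <= map fst st0}.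
Proof.
have : Inv [::] by split => //.
rewrite /st0; move: [::]; elim: S => [|w s IH] L IL /=.
  by split.
have [I' sub'] := IH _ (stepA_inv w IL); split => // x; rewrite in_cons.
case/orP => [/eqP->|]; last exact: sub'.
have := stepA_mem w L.
elim: s {IH I' sub'} (stepA w L) => [//|w' s IH2] L' wL' /=.
apply: IH2; have := stepA_pre w' L'; move=> [K ->].
by rewrite map_cat mem_cat wL'.
Qed.

Definition D := [set z | (0 < z)%N /\ A z /\ forall y, y \in map snd st0 -> c y z = j].

Definition vtxP (L : seq (nat * nat)) : set nat :=
  [set v | v \notin S /\ v \notin map fst L /\
                    forall x, x \in map fst L -> x \notin S -> ~ adj G v x].
Definition fresh_vtx L : nat := xget 0%N (vtxP L).

Lemma fresh_vtxP L : vtxP L (fresh_vtx L).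
Proof.
apply: xgetPex.
apply: contrapT => nE.
have h : ~ dominating_minus G S [seq x <- map fst L | x \notin S] by apply: HS.
apply: h; split.
  by move=> x; rewrite mem_filter => /andP[].
move=> v vS vX; apply: contrapT => nx.
apply: nE; exists v; split => //; split.
  by apply/negP => vL; move: vX; rewrite mem_filter vS vL.
move=> x xL xS axv; apply: nx; exists x => //.
by rewrite mem_filter xS xL.
Qed.

Definition stepB (n : nat) L :=
  if `[< D n >] && (n \notin map snd L) then rcons L (fresh_vtx L, n) else L.

Lemma stepB_pre n L : pre L (stepB n L).
Proof. rewrite /stepB; case: ifP => _; [exact: pre_rcons|exact: pre_refl]. Qed.

Lemma stepB_mem n L : D n -> n \in map snd (stepB n L).
Proof.
move=> Dn; rewrite /stepB; have -> : `[< D n >] = true by apply/asboolP.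
case: ifP => /=; first by rewrite map_rcons mem_rcons mem_head.
by move/negbFE.
Qed.

Lemma stepB_new n L p : p \in stepB n L -> p \notin L -> p.1 \notin S.
Proof.
rewrite /stepB; case: ifP => [_|_ -> //]; rewrite mem_rcons in_cons.
case/orP => [/eqP -> _|->//] /=; by have [] := fresh_vtxP L.
Qed.

Lemma stepB_inv n L : Inv L -> (forall p, p \in L -> p.1 \in S -> p \in st0) ->
  Inv (stepB n L).
Proof.
move=> IL H0; rewrite /stepB; case: ifP => // /andP[/asboolP [n0 [An Cn]] nL].
have [vS [vL vN]] := fresh_vtxP L.
set v := fresh_vtx L in vS vL vN *.
case: IL => u1 u2 HA HC.
have key : forall p, p \in L -> adj G p.1 v -> c p.2 n = j.
  move=> p pL apv; have [pS|pS] := boolP (p.1 \in S).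
    by apply: Cn; apply: map_f; apply: H0.
  by exfalso; apply: (vN p.1) => //; [apply: map_f|apply: adj_sym].
split.
- by rewrite map_rcons rcons_uniq vL.
- by rewrite map_rcons rcons_uniq nL.
- by move=> p; rewrite mem_rcons in_cons => /orP[/eqP->//|]; exact: HA.
- move=> p q; rewrite !mem_rcons !in_cons.
  move=> /orP[/eqP->|pL] /orP[/eqP->|qL] /=.
  + by move=> /adj_irrefl.
  + by move=> /adj_sym/(key q qL); rewrite csym.
  + exact: key.
  + exact: HC.
Qed.

Fixpoint st n := if n is m.+1 then stepB m (stepA m (st m)) else st0.

Definition J L := [/\ Inv L, pre st0 L, {subset S <= map fst L} &
   (forall p, p \in L -> p.1 \in S -> p \in st0)].

Lemma st_J n : J (st n).
Proof.
elim: n => [|n [I1 P1 S1 H1]] /=.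
  have [I0 S0] := st0_props; split => //; exact: pre_refl.
have PA := stepA_pre n (st n).
have H2 : forall p, p \in stepA n (st n) -> p.1 \in S -> p \in st0.
  move=> p pA pS; have [pL|pL] := boolP (p \in st n); first exact: H1.
  have [e1 nL] := stepA_new pA pL; exfalso; move: nL.
  have := S1 _ pS; rewrite e1 => h; by rewrite h.
split.
- apply: stepB_inv => //; exact: stepA_inv.
- exact: pre_trans P1 (pre_trans PA (stepB_pre _ _)).
- move=> x xS; have [K ->] := pre_trans PA (stepB_pre n (stepA n (st n))).
  by rewrite map_cat mem_cat S1.
- move=> p pB pS; have [pA|pA] := boolP (p \in stepA n (st n)); first exact: H2.
  by move: (stepB_new pB pA); rewrite pS.
Qed.

Lemma st_pre n m : (n <= m)%N -> pre (st n) (st m).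
Proof.
elim: m => [|m IH]; first by rewrite leqn0 => /eqP->; exact: pre_refl.
rewrite leq_eqVlt => /orP[/eqP->|]; first exact: pre_refl.
rewrite ltnS => /IH P; apply: pre_trans P _ => /=.
exact: pre_trans (stepA_pre _ _) (stepB_pre _ _).
Qed.

Lemma st_fst n : n \in map fst (st n.+1).
Proof.
rewrite /=; have [K ->] := stepB_pre n (stepA n (st n)).
by rewrite map_cat mem_cat stepA_mem.
Qed.

Definition emb v := lkp (st v.+1) v.

Lemma emb_mem v N : (v < N)%N -> (v, emb v) \in st N.
Proof.
move=> vN; apply: (pre_mem (st_pre vN)); exact: lkp_mem (st_fst v).
Qed.

Lemma D_range : D `<=` range emb.
Proof.
move=> d Dd; have : d \in map snd (st d.+1) := stepB_mem _ Dd.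
move=> /mapP [p pL pd].
set N := (maxn d p.1).+1.
have pN : p \in st N by apply: (pre_mem (st_pre _) pL); rewrite ltnS leq_maxl.
have qN : (p.1, emb p.1) \in st N by apply: emb_mem; rewrite ltnS leq_maxr.
have [[u1 _ _ _] _ _ _] := st_J N.
exists p.1 => //; rewrite pd.
have EQ := uniq_map_eq u1 qN pN erefl; by rewrite -[in RHS]EQ.
Qed.

End Construction.

Theorem mainTheorem3 (G : graph) :
  (exists S : seq nat, no_finite_dominating_minus G S) ->
  forall (r : nat) (c : nat -> nat -> 'I_r), edge_coloring c ->
  exists f : nat -> nat,
    mono_copy G c f /\ (0 < upper_density (range f))%E.
Proof.
move=> [S HS] r c csym.
have [U [UU Uthin]] := exists_U.
have [j UA] : exists j, U (A c U j).
  apply: (U_pick UU) => x; rewrite /A /=.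
  apply: (U_pick UU) => y; by exists (c x y).
have JJ := st_J HS csym UU Uthin UA.
exists (emb G S c U j); split.
  split; [|split].
  - move=> u v fuv; set N := (maxn u v).+1.
    have uN : (u, emb G S c U j u) \in st G S c U j N.
      by apply: emb_mem; rewrite ltnS leq_maxl.
    have vN : (v, emb G S c U j v) \in st G S c U j N.
      by apply: emb_mem; rewrite ltnS leq_maxr.
    have [[_ u2 _ _] _ _ _] := JJ N.
    by have [] := uniq_map_eq u2 uN vN fuv.
  - move=> v; have [[_ _ HA _] _ _ _] := JJ v.+1.
    exact: (HA _ (emb_mem G S c U j (ltnSn v))).1.
  - exists j => u v auv; set N := (maxn u v).+1.
    have uN : (u, emb G S c U j u) \in st G S c U j N.
      by apply: emb_mem; rewrite ltnS leq_maxl.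
    have vN : (v, emb G S c U j v) \in st G S c U j N.
      by apply: emb_mem; rewrite ltnS leq_maxr.
    have [[_ _ _ HC] _ _ _] := JJ N.
    exact: (HC _ _ uN vN auv).
apply: pos_density => tR.
have Upos : U [set z | (0 < z)%N].
  have [//|UC] := in_ultra_setVsetC [set z | (0 < z)%N] UU.
  have hs : ~` [set z | (0 < z)%N] `<=` [set 0%N].
    by move=> z /=; case: z.
  by case: (Uthin _ UC (thin_sub hs thin_zero)).
have [[_ _ HA0 _] _] := st0_props G S csym UU Uthin UA.
have UCN : U [set z | forall y, y \in map snd (st0 S c U j) -> [set z | c y z = j] z].
  apply: (U_inter UU) => y /mapP [p pL ->]; exact: (HA0 p pL).2.
have UD : U (D S c U j).
  apply: (US UU) (UI UU Upos (UI UU UA UCN)) => z [z0 [Az Cz]].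
  by split.
apply: (Uthin _ UD); apply: thin_sub tR.
exact: (D_range HS csym UU Uthin UA).
Qed.
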